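(* Let $\Sigma$ be a finite group, let $f\colon A\to B$ be a difference homomorphism of difference rings, $X=\operatorname{PSpec}A$, $Y=\operatorname{PSpec}B$, and $f^*_\Sigma\colon Y\to X$, $\mathfrak q\mapsto f^{-1}(\mathfrak q)$. Then: (1) if for some $s\in A$ and $u\in B$ the map $\operatorname{Spec}B_{f(s)u}\to\operatorname{Spec}A_s$ induced by $f$ is surjective, then $f^*_\Sigma$ maps $Y_{f(s)u}$ onto $X_s$; (2) if for some $s\in A$ the map $\operatorname{Spec}B_{f(s)}\to\operatorname{Spec}A_s$ induced by $f$ has the going-up property, then $f^*_\Sigma\colon Y_{f(s)}\to X_s$ has the going-up property; (3) if for some $s\in A$ and $u\in B$ the map $\operatorname{Spec}B_{f(s)u}\to\operatorname{Spec}A_s$ induced by $f$ has the going-down property, then $f^*_\Sigma\colon Y_{f(s)u}\to X_s$ has the going-down property.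
   Context: A difference ring is a commutative ring with identity with an action of the group $\Sigma$ by ring automorphisms; a difference homomorphism is a unital ring homomorphism commuting with the actions; a difference ideal is a $\Sigma$-stable ideal. A difference ideal $\mathfrak q$ is pseudoprime if there is a multiplicatively closed $S\ni1$ such that $\mathfrak q$ is maximal among difference ideals not meeting $S$; $\operatorname{PSpec}A$ is the set of pseudoprime ideals, and for $s\in A$, $X_s$ denotes the set of pseudoprime ideals of $A$ not containing $s$ (similarly $Y_t$ for $t\in B$). Contractions of pseudoprime ideals under difference homomorphisms are pseudoprime. A map $g\colon\operatorname{Spec}B'\to\operatorname{Spec}A'$ (contraction along $A'\to B'$) has the going-up property if for every chain of primes $\mathfrak p_1\subseteq\dots\subseteq\mathfrak p_n$ of $A'$ and every chain $\mathfrak q_1\subseteq\dots\subseteq\mathfrak q_m$ ($0<m<n$) of primes of $B'$ with $\mathfrak q_i^c=\mathfrak p_i$, the latter chain extends to $\mathfrak q_1\subseteq\dots\subseteq\mathfrak q_n$ with $\mathfrak q_i^c=\mathfrak p_i$ for all $i$; going-down is defined in the same way with all inclusions reversed. For subsets $Y'\subseteq Y$, $X'\subseteq X$ with $f^*_\Sigma(Y')\subseteq X'$, the map $f^*_\Sigma\colon Y'\to X'$ has the going-up (resp. going-down) property if the same condition holds with all chains consisting of pseudoprime ideals, the chains of $A$ lying in $X'$ and the chains of $B$ (including the extended ones) lying in $Y'$. *)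

(* Defs.v *)
From HB Require Import structures.
From mathcomp Require Import all_boot all_order all_algebra all_fingroup.
Set Implicit Arguments. Unset Strict Implicit. Unset Printing Implicit Defensive.
Import GRing.Theory.
Local Open Scope ring_scope.

Definition subset_p {T : Type} (I J : T -> Prop) : Prop := forall x, I x -> J x.
Definition same_p {T : Type} (I J : T -> Prop) : Prop := forall x, I x <-> J x.

Definition contr {A B : Type} (f : A -> B) (Q : B -> Prop) : A -> Prop :=
  fun x => Q (f x).

Definition is_ideal (R : comPzRingType) (I : R -> Prop) : Prop :=
  [/\ I 0, (forall x y, I x -> I y -> I (x + y)) & (forall r x, I x -> I (r * x))].

Definition is_prime_ideal (R : comPzRingType) (P : R -> Prop) : Prop :=
  [/\ is_ideal P, ~ P 1 & (forall x y, P (x * y) -> P x \/ P y)].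

(* An action of the (finite) group gT on R by ring automorphisms:
   each sigma acts by a ring endomorphism, 1 acts trivially and the
   action is compatible with the product (hence each sigma acts bijectively). *)
Definition is_diff_action (gT : finGroupType) (R : comPzRingType)
  (act : gT -> R -> R) : Prop :=
  [/\ (forall g x y, act g (x + y) = act g x + act g y),
      (forall g x y, act g (x * y) = act g x * act g y),
      (forall g, act g 1 = 1),
      (forall x, act 1%g x = x) &
      (forall g h x, act (g * h)%g x = act g (act h x))].

Definition is_diff_hom (gT : finGroupType) (A B : comPzRingType)
  (actA : gT -> A -> A) (actB : gT -> B -> B) (f : {rmorphism A -> B}) : Prop :=
  forall g x, f (actA g x) = actB g (f x).

Definition is_diff_ideal (gT : finGroupType) (R : comPzRingType)
  (act : gT -> R -> R) (I : R -> Prop) : Prop :=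
  is_ideal I /\ (forall g x, I x -> I (act g x)).

Definition mult_closed_with1 (R : comPzRingType) (S : R -> Prop) : Prop :=
  S 1 /\ (forall x y, S x -> S y -> S (x * y)).

Definition is_pseudoprime (gT : finGroupType) (R : comPzRingType)
  (act : gT -> R -> R) (q : R -> Prop) : Prop :=
  exists S : R -> Prop,
    [/\ mult_closed_with1 S,
        is_diff_ideal act q,
        (forall x, q x -> ~ S x) &
        (forall I, is_diff_ideal act I -> subset_p q I ->
                   (forall x, I x -> ~ S x) -> subset_p I q)].

(* X_s = pseudoprime ideals not containing s. *)
Definition PSpec_basic (gT : finGroupType) (R : comPzRingType)
  (act : gT -> R -> R) (s : R) : (R -> Prop) -> Prop :=
  fun q => is_pseudoprime act q /\ ~ q s.

(* Spec R_s, identified with the primes of R not containing s. *)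
Definition Spec_loc (R : comPzRingType) (s : R) : (R -> Prop) -> Prop :=
  fun p => is_prime_ideal p /\ ~ p s.

(* Ordering used for chains: up = true gives inclusions p_i ⊆ p_(i+1)
   (going-up), up = false gives p_i ⊇ p_(i+1) (going-down). *)
Definition chain_rel {T : Type} (up : bool) (I J : T -> Prop) : Prop :=
  if up then subset_p I J else subset_p J I.

Definition is_chain {T : Type} (up : bool) (c : nat -> T -> Prop) (n : nat) : Prop :=
  forall i, (i.+1 < n)%N -> chain_rel up (c i) (c i.+1).

(* Chains are indexed by 0..n-1 (resp. 0..m-1). *)
Definition going_prop {A B : Type} (up : bool) (f : A -> B)
  (X' : (A -> Prop) -> Prop) (Y' : (B -> Prop) -> Prop) : Prop :=
  forall (n m : nat) (p : nat -> A -> Prop) (q : nat -> B -> Prop),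
    (0 < m)%N -> (m < n)%N ->
    is_chain up p n -> (forall i, (i < n)%N -> X' (p i)) ->
    is_chain up q m -> (forall i, (i < m)%N -> Y' (q i)) ->
    (forall i, (i < m)%N -> same_p (contr f (q i)) (p i)) ->
    exists q' : nat -> B -> Prop,
      [/\ (forall i, (i < m)%N -> same_p (q' i) (q i)),
          is_chain up q' n,
          (forall i, (i < n)%N -> Y' (q' i)) &
          (forall i, (i < n)%N -> same_p (contr f (q' i)) (p i))].

Definition going_up {A B : Type} := @going_prop A B true.
Definition going_down {A B : Type} := @going_prop A B false.

Definition maps_into {A B : Type} (f : A -> B)
  (X' : (A -> Prop) -> Prop) (Y' : (B -> Prop) -> Prop) : Prop :=
  forall Q, Y' Q -> X' (contr f Q).

Definition maps_onto {A B : Type} (f : A -> B)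
  (X' : (A -> Prop) -> Prop) (Y' : (B -> Prop) -> Prop) : Prop :=
  maps_into f X' Y' /\ (forall P, X' P -> exists2 Q, Y' Q & same_p (contr f Q) P).

(* Main.v *)
Require Import Defs.
From HB Require Import structures.
From mathcomp Require Import all_boot all_order all_algebra all_fingroup.
From mathcomp Require Import boolp classical_sets.
From Stdlib Require Import Classical.
From mathcomp Require Import ring zify.
Import GRing.Theory.
Local Open Scope ring_scope.
Set Implicit Arguments.
Unset Strict Implicit.


Definition core (gT : finGroupType) (R : Type) (act : gT -> R -> R) (p : R -> Prop) : R -> Prop :=
  fun x => forall g, p (act g x).
Definition conjp (gT : finGroupType) (R : Type) (act : gT -> R -> R) (g : gT) (p : R -> Prop) : R -> Prop :=
  fun x => p (act g x).

Lemma act0 (gT : finGroupType) (R : comPzRingType) (act : gT -> R -> R) :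
  is_diff_action act -> forall g, act g 0 = 0.
Proof.
case=> hD _ _ _ _ g; have := hD g 0 0; rewrite addr0 => H.
by apply: (addrI (act g 0)); rewrite addr0 -H.
Qed.

Lemma ideal_conj (gT : finGroupType) (R : comPzRingType) (act : gT -> R -> R) g p :
  is_diff_action act -> is_ideal p -> is_ideal (conjp act g p).
Proof.
move=> ha [h0 hD hM]; have := ha; case=> aD aM _ _ _; split.
- by rewrite /conjp act0.
- by move=> x y; rewrite /conjp aD; apply: hD.
- by move=> r x; rewrite /conjp aM; apply: hM.
Qed.

Lemma prime_conj (gT : finGroupType) (R : comPzRingType) (act : gT -> R -> R) g p :
  is_diff_action act -> is_prime_ideal p -> is_prime_ideal (conjp act g p).
Proof.
move=> ha [hi h1 hp]; have := ha; case=> aD aM a1 _ _; split.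
- exact: ideal_conj.
- by rewrite /conjp a1.
- by move=> x y; rewrite /conjp aM; apply: hp.
Qed.

Lemma diff_ideal_core (gT : finGroupType) (R : comPzRingType) (act : gT -> R -> R) p :
  is_diff_action act -> is_ideal p -> is_diff_ideal act (core act p).
Proof.
move=> ha hi; have := ha; case=> _ _ _ _ aC; split; last first.
  by move=> g x hx h; rewrite /core -aC; apply: hx.
case: hi => [h0 hD hM]; split.
- by move=> g; rewrite act0.
- by move=> x y hx hy g; have := ha; case=> aD _ _ _ _; rewrite aD; apply: hD.
- by move=> r x hx g; have := ha; case=> _ aM _ _ _; rewrite aM; apply: hM.
Qed.

Lemma core_conj (gT : finGroupType) (R : Type) (act : gT -> R -> R) h p :
  (forall x, act 1%g x = x) -> (forall g h x, act (g * h)%g x = act g (act h x)) ->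
  same_p (core act (conjp act h p)) (core act p).
Proof.
move=> a1 aC x; split=> H g.
  by have := H (h^-1 * g)%g; rewrite /conjp -aC mulKVg.
by rewrite /conjp -aC; apply: H.
Qed.

Lemma core_sub (gT : finGroupType) (R : Type) (act : gT -> R -> R) p :
  (forall x, act 1%g x = x) -> subset_p (core act p) p.
Proof. by move=> a1 x H; have := H 1%g; rewrite a1. Qed.

Lemma core_mono (gT : finGroupType) (R : Type) (act : gT -> R -> R) p p' :
  subset_p p p' -> subset_p (core act p) (core act p').
Proof. by move=> H x Hx g; apply: H. Qed.

Lemma core_same (gT : finGroupType) (R : Type) (act : gT -> R -> R) p p' :
  same_p p p' -> same_p (core act p) (core act p').
Proof. by move=> H x; split=> Hx g; apply/H. Qed.

Lemma prime_pseudo (gT : finGroupType) (R : comPzRingType) (act : gT -> R -> R) p q :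
  is_diff_action act -> is_prime_ideal p -> same_p q (core act p) ->
  is_pseudoprime act q.
Proof.
move=> ha [hi p1 pp] hq; have := ha; case=> _ _ _ a1 _.
exists (fun x => ~ p x); split.
- split=> // x y hx hy /pp []; by [].
- have [[c0 cD cM] cS] := diff_ideal_core ha hi; split; first split.
  + by apply/hq.
  + by move=> x y /hq hx /hq hy; apply/hq; apply: cD.
  + by move=> r x /hq hx; apply/hq; apply: cM.
  + by move=> g x /hq hx; apply/hq; apply: cS.
- by move=> x /hq hx; apply; apply: (core_sub a1).
- move=> I [_ IS] _ Id x Ix; apply/hq => g.
  by apply: NNPP; apply: Id; apply: IS.
Qed.


Lemma prime_contr (A B : comPzRingType) (f : {rmorphism A -> B}) Q :
  is_prime_ideal Q -> is_prime_ideal (contr f Q).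
Proof.
case=> [[h0 hD hM] h1 hp]; split; first split.
- by rewrite /contr rmorph0.
- by move=> x y; rewrite /contr rmorphD; apply: hD.
- by move=> r x; rewrite /contr rmorphM; apply: hM.
- by rewrite /contr rmorph1.
- by move=> x y; rewrite /contr rmorphM; apply: hp.
Qed.

Lemma contr_core (gT : finGroupType) (A B : comPzRingType) (actA : gT -> A -> A)
  (actB : gT -> B -> B) (f : {rmorphism A -> B}) Q :
  is_diff_hom actA actB f ->
  same_p (contr f (core actB Q)) (core actA (contr f Q)).
Proof. by move=> hf x; rewrite /contr /core; split=> H g; rewrite ?hf // -hf. Qed.

Lemma contr_conj (gT : finGroupType) (A B : comPzRingType) (actA : gT -> A -> A)
  (actB : gT -> B -> B) (f : {rmorphism A -> B}) g Q :
  is_diff_hom actA actB f ->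
  same_p (contr f (conjp actB g Q)) (conjp actA g (contr f Q)).
Proof. by move=> hf x; rewrite /contr /conjp hf. Qed.

Lemma prime_prod (R : comPzRingType) (I : Type) (r : R -> Prop) (s : seq I) (F : I -> R) :
  is_prime_ideal r -> r (\prod_(i <- s) F i) -> exists i, r (F i).
Proof.
case=> _ h1 hp; elim: s => [|a s IH]; first by rewrite big_nil.
by rewrite big_cons => /hp [H|/IH//]; exists a.
Qed.

Lemma avoid (gT : finGroupType) (R : comPzRingType) (act : gT -> R -> R) p r :
  is_diff_action act -> is_ideal p -> is_prime_ideal r ->
  subset_p (core act p) r -> exists g, subset_p (conjp act g p) r.
Proof.
move=> ha hi hr hsub; apply: NNPP => hno.
have H : forall g, exists x, conjp act g p x /\ ~ r x.
  move=> g; apply: NNPP => H2; apply: hno; exists g => x hx.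
  by apply: NNPP => nr; apply: H2; exists x.
have [F hF] := choice H.
have : r (\prod_(g <- index_enum gT) F g).
  apply: hsub => h; have := ha; case=> _ aM a1 _ _.
  rewrite (big_morph (act h) (aM h) (a1 h)).
  rewrite (bigD1_seq h) ?mem_index_enum ?index_enum_uniq //=.
  case: (hF h) => [hx _]; case: hi => _ _ hM.
  by rewrite mulrC; apply: hM.
by case/(prime_prod hr) => g; case: (hF g).
Qed.

Section ZornPart.
Local Open Scope classical_set_scope.

Lemma exists_prime (R : comPzRingType) (q S : R -> Prop) :
  mult_closed_with1 S -> is_ideal q -> (forall x, q x -> ~ S x) ->
  exists p, [/\ is_prime_ideal p, subset_p q p & forall x, p x -> ~ S x].
Proof.
move=> [S1 SM] hq qS.
pose good (I : R -> Prop) := [/\ is_ideal I, subset_p q I & forall x, I x -> ~ S x].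
pose PP : set (set R) := fun I => I = set0 \/ good I.
have PPx : forall I x, PP I -> I x -> good I.
  by move=> I x [->|//]. 
have [A0 [PA0 maxA0]] : exists A, PP A /\ forall B, A `<` B -> ~ PP B.
  apply: Zorn_bigcup => F FP Ftot.
  case: (classic (exists X, F X /\ exists z, X z)); last first.
    move=> hn; left; apply/funext => z; apply/propext; split=> //.
    by case=> X FX Xz; apply: hn; exists X; split=> //; exists z.
  case=> X0 [FX0 [z0 X0z0]]; right.
  have gX0 := PPx _ _ (FP _ FX0) X0z0.
  have gen : forall X z, F X -> X z -> good X by move=> X z FX Xz; exact: PPx _ _ (FP _ FX) Xz.
  case: hq => [q0 qD qM].
  split; first split.
  - by exists X0 => //; case: gX0 => _ sq _; apply: sq.
  - move=> x y [X FX Xx] [Y FY Yy].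
    case: (Ftot _ _ FX FY) => [XY|YX].
    + exists Y => //; have [[_ hD _] _ _] := gen _ _ FY Yy; apply: hD => //; exact: XY.
    + exists X => //; have [[_ hD _] _ _] := gen _ _ FX Xx; apply: hD => //; exact: YX.
  - move=> r x [X FX Xx]; exists X => //.
    by have [[_ _ hM] _ _] := gen _ _ FX Xx; apply: hM.
  - by move=> x qx; exists X0 => //; case: gX0 => _ sq _; apply: sq.
  - by move=> x [X FX Xx]; have [_ _ hS] := gen _ _ FX Xx; apply: hS.
have gA0 : good A0.
  case: PA0 => // eA0; exfalso; apply: (maxA0 q).
    rewrite eA0; split; first by move=> ?.
    by move=> H; have := H 0; case: hq => q0 _ _; move/(_ q0).
  by right; split=> //; move=> x.
case: gA0 => [[a0 aD aM] qA aS].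
exists A0; split=> //; split=> //.
  by move=> /aS.
move=> x y Axy; apply: NNPP => hn.
have hx : ~ A0 x by move=> H; apply: hn; left.
have hy : ~ A0 y by move=> H; apply: hn; right.
pose Bt t : set R := fun z => exists a r, A0 a /\ z = a + r * t.
have meet : forall t, ~ A0 t -> exists a r, A0 a /\ S (a + r * t).
  move=> t nt; apply: NNPP => hno; apply: (maxA0 (Bt t)).
    split; first by move=> z Az; exists z, 0; split=> //; rewrite mul0r addr0.
    by move=> H; apply: nt; apply: H; exists 0, 1; split; [exact: a0 | rewrite add0r mul1r].
  right; split; first split.
  - by exists 0, 0; rewrite mul0r addr0.
  - move=> z w [a [r [Aa ->]]] [b [r' [Ab ->]]]; exists (a + b), (r + r'); split.
      exact: aD.
    by rewrite mulrDl addrACA.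
  - move=> c z [a [r [Aa ->]]]; exists (c * a), (c * r); split; first exact: aM.
    by rewrite mulrDr mulrA.
  - by move=> z qz; exists z, 0; split; [exact: qA | rewrite mul0r addr0].
  - by move=> z [a [r [Aa ->]]] Sz; apply: hno; exists a, r.
have [a1 [r1 [Aa1 S1']]] := meet _ hx.
have [a2 [r2 [Aa2 S2']]] := meet _ hy.
apply: (aS _ _ (SM _ _ S1' S2')).
have -> : (a1 + r1 * x) * (a2 + r2 * y) =
  ((a2 + r2 * y) * a1 + (r1 * x) * a2) + (r1 * r2) * (x * y).
  by ring.
apply: (aD); last exact: (aM).
by apply: (aD); apply: (aM).
Qed.

End ZornPart.


Lemma same_sym (T : Type) (p q : T -> Prop) : same_p p q -> same_p q p.
Proof. by move=> H x; split=> /H. Qed.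
Lemma same_trans (T : Type) (p q r : T -> Prop) : same_p p q -> same_p q r -> same_p p r.
Proof. by move=> H1 H2 x; split=> [/H1/H2|/H2/H1]. Qed.

Lemma pseudo_prime (gT : finGroupType) (R : comPzRingType) (act : gT -> R -> R) q :
  is_diff_action act -> is_pseudoprime act q ->
  exists p, is_prime_ideal p /\ same_p q (core act p).
Proof.
move=> ha [S [Sm [qi qst] qS qmax]].
have [p [pp qp pS]] := exists_prime Sm qi qS.
exists p; split=> //.
have a1 : forall x, act 1%g x = x by case: ha.
have hcs : subset_p q (core act p) by move=> x qx g; apply: qp; apply: qst.
move=> x; split; first exact: hcs.
apply: qmax.
- by apply: diff_ideal_core => //; case: pp.
- exact: hcs.
- by move=> z /(core_sub a1) /pS.
Qed.

Lemma pseudo_avoid (gT : finGroupType) (R : comPzRingType) (act : gT -> R -> R) q s :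
  is_diff_action act -> is_pseudoprime act q -> ~ q s ->
  exists p, [/\ is_prime_ideal p, ~ p s & same_p q (core act p)].
Proof.
move=> ha hq ns; have [p [pp qp]] := pseudo_prime ha hq.
have [g ng] : exists g, ~ p (act g s).
  apply: NNPP => H; apply: ns; apply/qp => g; apply: NNPP => H2; apply: H; by exists g.
have [_ _ _ a1 aC] := ha.
exists (conjp act g p); split.
- exact: prime_conj.
- exact: ng.
- exact: same_trans qp (same_sym (core_conj g p a1 aC)).
Qed.

Lemma desc_chain (gT : finGroupType) (R : comPzRingType) (act : gT -> R -> R) (N : nat) :
  is_diff_action act ->
  forall (P : nat -> R -> Prop) (r : R -> Prop),
  (forall i, (i <= N)%N -> is_pseudoprime act (P i)) ->
  (forall i, (i < N)%N -> subset_p (P i.+1) (P i)) ->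
  is_prime_ideal r -> same_p (core act r) (P 0%N) ->
  exists r' : nat -> R -> Prop,
    [/\ r' 0%N = r,
        (forall i, (i <= N)%N -> is_prime_ideal (r' i) /\ same_p (core act (r' i)) (P i)),
        (forall i, (i < N)%N -> subset_p (r' i.+1) (r' i)) &
        (forall i, (i <= N)%N -> subset_p (r' i) r)].
Proof.
move=> ha; have [_ _ _ a1 aC] := ha.
elim: N => [|N IH] P r hP hch hr hc.
  exists (fun _ => r); split=> //.
  - by move=> [|i] // _; split.
  - by move=> i _ x.
have [p1 [pp1 hp1]] := pseudo_prime ha (hP 1%N isT).
have [g hg] : exists g, subset_p (conjp act g p1) r.
  apply: avoid => //; first by case: pp1.
  move=> x /(proj2 (hp1 x)) h1; apply: (core_sub a1); apply/hc.
  by apply: (hch 0%N).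
have hr1 : same_p (core act (conjp act g p1)) (P 1%N).
  exact: same_trans (core_conj g p1 a1 aC) (same_sym hp1).
have [r'' [e0 hpr hch' hsub]] := IH (fun i => P i.+1) (conjp act g p1)
   (fun i hi => hP i.+1 hi) (fun i hi => hch i.+1 hi) (prime_conj g ha pp1) hr1.
exists (fun i => if i is j.+1 then r'' j else r); split=> //.
- by move=> [|i] hi; [split | apply: hpr].
- move=> [|i] hi; last by apply: hch'.
  by rewrite /= e0.
- move=> [|i] hi x //= hx; apply: hg; exact: hsub hx.
Qed.


Lemma contr_same (A B : Type) (f : A -> B) Q Q' :
  same_p Q Q' -> same_p (contr f Q) (contr f Q').
Proof. by move=> H x; apply: H. Qed.

Lemma same_refl (T : Type) (p : T -> Prop) : same_p p p.
Proof. by move=> x. Qed.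

Lemma ideal_mulr (R : comPzRingType) (I : R -> Prop) x u : is_ideal I -> I x -> I (x * u).
Proof. by case=> _ _ hM hx; rewrite mulrC; apply: hM. Qed.

Lemma pseudo_ideal (gT : finGroupType) (R : comPzRingType) (act : gT -> R -> R) q :
  is_pseudoprime act q -> is_ideal q.
Proof. by case=> S [_ [hi _] _ _]. Qed.

Lemma into_lem (gT : finGroupType) (A B : comPzRingType)
  (actA : gT -> A -> A) (actB : gT -> B -> B) (f : {rmorphism A -> B})
  (hA : is_diff_action actA) (hB : is_diff_action actB)
  (hf : is_diff_hom actA actB f) s u :
  maps_into f (PSpec_basic actA s) (PSpec_basic actB (f s * u)).
Proof.
move=> Q [hQ nQ]; have [Q1 [pQ1 eQ]] := pseudo_prime hB hQ; split.
  apply: (prime_pseudo hA (prime_contr f pQ1)).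
  exact: same_trans (contr_same f eQ) (contr_core Q1 hf).
by move=> hs; apply: nQ; apply: ideal_mulr => //; exact: pseudo_ideal hQ.
Qed.


Lemma onto_lem (gT : finGroupType) (A B : comPzRingType)
  (actA : gT -> A -> A) (actB : gT -> B -> B) (f : {rmorphism A -> B})
  (hA : is_diff_action actA) (hB : is_diff_action actB)
  (hf : is_diff_hom actA actB f) s u :
  maps_onto f (Spec_loc s) (Spec_loc (f s * u)) ->
  maps_onto f (PSpec_basic actA s) (PSpec_basic actB (f s * u)).
Proof.
move=> [_ hon]; split; first exact: into_lem.
have [_ _ _ b1 _] := hB.
move=> P [hP nP]; have [p [pp np eP]] := pseudo_avoid hA hP nP.
have [Q1 [pQ1 nQ1] eQ1] := hon p (conj pp np).
exists (core actB Q1); first split.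
- exact: prime_pseudo hB pQ1 (same_refl _).
- by move/(core_sub b1).
apply: same_trans (contr_core Q1 hf) _.
exact: same_trans (core_same actA eQ1) (same_sym eP).
Qed.

Lemma down_lem (gT : finGroupType) (A B : comPzRingType)
  (actA : gT -> A -> A) (actB : gT -> B -> B) (f : {rmorphism A -> B})
  (hA : is_diff_action actA) (hB : is_diff_action actB)
  (hf : is_diff_hom actA actB f) s u :
  going_down f (Spec_loc s) (Spec_loc (f s * u)) ->
  going_down f (PSpec_basic actA s) (PSpec_basic actB (f s * u)).
Proof.
move=> hGD n m P Q hm0 hmn chP XP chQ YQ cQ.
have [_ _ _ a1 aC] := hA; have [_ _ _ b1 bC] := hB.
case: m hm0 hmn chQ YQ cQ => [//|k] _ hmn chQ YQ cQ.
have [YQk1 YQk2] := YQ k (ltnSn k).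
have [Q1 [pQ1 nQ1 eQ1]] := pseudo_avoid hB YQk1 YQk2.
pose p' := contr f Q1.
have np' : ~ p' s.
  by move=> h; apply: nQ1; apply: ideal_mulr => //; case: pQ1.
have eP : same_p (core actA p') (P (k + 0)%N).
  rewrite addn0; apply: same_sym; apply: same_trans (same_sym (cQ k (ltnSn k))) _.
  exact: same_trans (contr_same f eQ1) (contr_core Q1 hf).
pose N := (n.-1 - k)%N.
have hP1 : forall j, (j <= N)%N -> is_pseudoprime actA (P (k + j)%N).
  by move=> j hj; apply: (proj1 (XP (k + j)%N _)); lia.
have hP2 : forall j, (j < N)%N -> subset_p (P (k + j.+1)%N) (P (k + j)%N).
  by move=> j hj; rewrite addnS; apply: (chP (k + j)%N); lia.
have [r' [e0 hr hch hsub]] := desc_chain (N:=N) hA (P := fun j => P (k + j)%N)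
   hP1 hP2 (prime_contr f pQ1) eP.
have hN : (1 < N.+1)%N by lia.
have [q3 [h0 hch3 hY hc]] := hGD N.+1 1%N r' (fun _ => Q1) isT hN
  (fun i hi => hch i ltac:(lia))
  (fun i hi => conj (proj1 (hr i ltac:(lia))) (fun h => np' (hsub i ltac:(lia) s h)))
  (fun i hi => ltac:(by []))
  (fun i hi => conj pQ1 nQ1)
  (fun i hi => ltac:(case: i hi => [|//] _; rewrite e0; exact: same_refl)).
exists (fun i => if (i < k.+1)%N then Q i else core actB (q3 (i - k)%N)); split.
- by move=> i hi; rewrite hi; exact: same_refl.
- move=> i hi; rewrite /chain_rel /=; case: ifP => h1; case: ifP => h2.
  + exact: chQ i h1.
  + exfalso; lia.
  + have ei : i = k by lia.
    rewrite ei subSnn => x hx.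
    apply/eQ1; apply: (proj1 (core_same actB (h0 0%N isT) x)).
    exact: (core_mono (act:=actB) (hch3 0%N hN : subset_p (q3 1%N) (q3 0%N)) hx).
  + rewrite subSn; last by lia.
    by apply: core_mono; apply: hch3; lia.
- move=> i hi; case: ifP => h1; first exact: YQ.
  have [hq3p hq3n] := hY (i - k)%N ltac:(lia).
  split; first exact: prime_pseudo hB hq3p (same_refl _).
  by move/(core_sub b1).
- move=> i hi; case: ifP => h1; first exact: cQ.
  apply: same_trans (contr_core _ hf) _.
  apply: same_trans (core_same actA (hc (i - k)%N ltac:(lia))) _.
  have := proj2 (hr (i - k)%N ltac:(lia)).
  by have -> : (k + (i - k) = i)%N by lia.
Qed.


Lemma up_lem (gT : finGroupType) (A B : comPzRingType)
  (actA : gT -> A -> A) (actB : gT -> B -> B) (f : {rmorphism A -> B})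
  (hA : is_diff_action actA) (hB : is_diff_action actB)
  (hf : is_diff_hom actA actB f) s :
  going_up f (Spec_loc s) (Spec_loc (f s)) ->
  going_up f (PSpec_basic actA s) (PSpec_basic actB (f s)).
Proof.
move=> hGU n m P Q hm0 hmn chP XP chQ YQ cQ.
have [_ _ _ a1 aC] := hA; have [_ _ _ b1 bC] := hB.
case: m hm0 hmn chQ YQ cQ => [//|k] _ hmn chQ YQ cQ.
have [YQk1 YQk2] := YQ k (ltnSn k).
have [Q1 [pQ1 nQ1 eQ1]] := pseudo_avoid hB YQk1 YQk2.
pose p' := contr f Q1.
have eP : same_p (core actA p') (P k).
  apply: same_sym; apply: same_trans (same_sym (cQ k (ltnSn k))) _.
  exact: same_trans (contr_same f eQ1) (contr_core Q1 hf).
pose N := (n.-1 - k)%N.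
have [XPt1 XPt2] := XP n.-1 ltac:(lia).
have [rt [prt nrt ert]] := pseudo_avoid hA XPt1 XPt2.
have hP1 : forall j, (j <= N)%N -> is_pseudoprime actA (P (n.-1 - j)%N).
  by move=> j hj; apply: (proj1 (XP (n.-1 - j)%N _)); lia.
have hP2 : forall j, (j < N)%N -> subset_p (P (n.-1 - j.+1)%N) (P (n.-1 - j)%N).
  move=> j hj; have e : ((n.-1 - j.+1).+1 = n.-1 - j)%N by lia.
  have := chP (n.-1 - j.+1)%N; rewrite e; apply; lia.
have ert' : same_p (core actA rt) (P (n.-1 - 0)%N) by rewrite subn0; exact: same_sym.
have [r' [e0 hr hch hsub]] := desc_chain (N:=N) hA (P := fun j => P (n.-1 - j)%N)
   hP1 hP2 prt ert'.
have [hrN1 hrN2] := hr N (leqnn N).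
have eNk : (n.-1 - N = k)%N by lia.
rewrite /= eNk in hrN2.
have [tau htau] : exists tau, subset_p (conjp actA tau p') (r' N).
  apply: avoid => //; first by case: (prime_contr f pQ1).
  by move=> x /eP /hrN2 /(core_sub a1).
pose rr := fun j => if j is 0 then conjp actA tau p' else r' (N - j)%N.
have hN : (1 < N.+1)%N by lia.
have rrsub : forall i, (i < N.+1)%N -> subset_p (rr i) rt.
  move=> [|i] hi x /= hx.
    by apply: (hsub N (leqnn N)); apply: htau.
  by apply: (hsub (N - i.+1)%N); first lia.
have hchain : is_chain true rr N.+1.
  move=> [|i] hi x /= hx.
    have e : ((N - 1).+1 = N)%N by lia.
    have := hch (N - 1)%N ltac:(lia); rewrite e => H.
    by apply: H; apply: htau.
  have e : ((N - i.+2).+1 = N - i.+1)%N by lia.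
  have := hch (N - i.+2)%N ltac:(lia); rewrite e => H.
  exact: H.
have hYr : forall i, (i < N.+1)%N -> Spec_loc s (rr i).
  move=> i hi; split; last by move/(rrsub i hi).
  case: i hi => [|i] hi /=; first by apply: prime_conj; [|exact: prime_contr].
  by apply: (proj1 (hr _ _)); lia.
have hYq : Spec_loc (f s) (conjp actB tau Q1).
  split; first exact: prime_conj.
  rewrite /conjp -hf => h; apply: nrt; apply: (rrsub 0%N isT); exact: h.
have [q3 [h0 hch3 hY hc]] := hGU N.+1 1%N rr (fun _ => conjp actB tau Q1) isT hN
  hchain hYr
  (fun i hi => ltac:(by []))
  (fun i hi => hYq)
  (fun i hi => ltac:(case: i hi => [|//] _; exact: contr_conj)).
exists (fun i => if (i < k.+1)%N then Q i else core actB (q3 (i - k)%N)); split.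
- by move=> i hi; rewrite hi; exact: same_refl.
- move=> i hi; rewrite /chain_rel /=; case: ifP => h1; case: ifP => h2.
  + exact: chQ i h2.
  + have ei : i = k by lia.
    rewrite ei subSnn => x hx.
    apply: (core_mono (act:=actB) (hch3 0%N hN : subset_p (q3 0%N) (q3 1%N))).
    apply: (proj2 (core_same actB (h0 0%N isT) x)).
    apply/(core_conj tau Q1 b1 bC); exact/eQ1.
  + exfalso; lia.
  + rewrite subSn; last by lia.
    by apply: core_mono; apply: hch3; lia.
- move=> i hi; case: ifP => h1; first exact: YQ.
  have [hq3p hq3n] := hY (i - k)%N ltac:(lia).
  split; first exact: prime_pseudo hB hq3p (same_refl _).
  by move/(core_sub b1).
- move=> i hi; case: ifP => h1; first exact: cQ.
  apply: same_trans (contr_core _ hf) _.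
  apply: same_trans (core_same actA (hc (i - k)%N ltac:(lia))) _.
  have [j ej] : exists j, (i - k = j.+1)%N by exists (i - k).-1; lia.
  rewrite ej /=.
  have := proj2 (hr (N - j.+1)%N ltac:(lia)).
  by have -> : (n.-1 - (N - j.+1) = i)%N by lia.
Qed.

Theorem proposition4p5 (gT : finGroupType) (A B : comPzRingType)
  (actA : gT -> A -> A) (actB : gT -> B -> B) (f : {rmorphism A -> B})
  (hA : is_diff_action actA) (hB : is_diff_action actB)
  (hf : is_diff_hom actA actB f) :
  [/\ (forall (s : A) (u : B),
         maps_onto f (Spec_loc s) (Spec_loc (f s * u)) ->
         maps_onto f (PSpec_basic actA s) (PSpec_basic actB (f s * u))),
      (forall s : A,
         going_up f (Spec_loc s) (Spec_loc (f s)) ->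
         maps_into f (PSpec_basic actA s) (PSpec_basic actB (f s)) /\
         going_up f (PSpec_basic actA s) (PSpec_basic actB (f s))) &
      (forall (s : A) (u : B),
         going_down f (Spec_loc s) (Spec_loc (f s * u)) ->
         maps_into f (PSpec_basic actA s) (PSpec_basic actB (f s * u)) /\
         going_down f (PSpec_basic actA s) (PSpec_basic actB (f s * u)))].
Proof.
split.
- by move=> s u; apply: onto_lem.
- move=> s hGU; split; last exact: up_lem.
  by have := into_lem hA hB hf (s:=s) (u:=1); rewrite mulr1.
- move=> s u hGD; split; first exact: into_lem.
  exact: down_lem.
Qed.
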